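(* Let $Q^n,Q^{n-1}$ be grid functions satisfying the boundary conditions with symmetric trace-free values, and $\overline P_{ijk}=\frac32P(Q^n_{ijk})-\frac12P(Q^{n-1}_{ijk})$. Define, for matrix-valued grid functions $Q$, $\mathbb{A}(Q)_{ijk}=\frac{Q_{ijk}}{\Delta t}-\frac{ML_1}{2}\Delta_hQ_{ijk}+\frac M2\big(\overline P_{ijk}:Q_{ijk}\big)\overline P_{ijk}-M\frac{L_2+L_3}{4}\alpha_h(Q)_{ijk}$. Then $\mathbb{A}$ is symmetric and positive definite on the space $V$ of matrix-valued grid functions satisfying the boundary conditions with symmetric trace-free values, i.e. $\langle\mathbb{A}(Q^1),Q^2\rangle_h=\langle Q^1,\mathbb{A}(Q^2)\rangle_h$ for all $Q^1,Q^2\in V$, and $\langle\mathbb{A}(Q),Q\rangle_h>0$ for all $Q\in V$, $Q\neq0$.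
   Context: Parameters: $a,b\in\mathbb{R}$, $c,L_1,L_2,L_3,M>0$, $\Delta t>0$, and $A_0>0$ such that $\inf\{\frac a2\operatorname{tr}(Q^2)-\frac b3\operatorname{tr}(Q^3)+\frac c4(\operatorname{tr}(Q^2))^2+A_0:\ Q\in\mathbb{R}^{3\times3}\text{ symmetric}\}>0$. For symmetric $Q$: $r(Q)=\sqrt{2(\frac a2\operatorname{tr}(Q^2)-\frac b3\operatorname{tr}(Q^3)+\frac c4(\operatorname{tr}(Q^2))^2+A_0)}$, $S(Q)=aQ-b(Q^2-\frac13\operatorname{tr}(Q^2)I)+c\operatorname{tr}(Q^2)Q$, $P(Q)=S(Q)/r(Q)$; $A:B=\sum_{i,j}A_{ij}B_{ij}$. Grid: $N\in\mathbb{N}$, $h=1/(N+1)$. Grid functions are families $(f_{ijk})_{(i,j,k)\in\mathbb{Z}^3}$ of real $3\times3$ matrices; the boundary conditions mean $f_{ijk}=0$ whenever $(i,j,k)\notin\{1,\dots,N\}^3$. $D^\pm_1f_{ijk}=\pm(f_{i\pm1,j,k}-f_{ijk})/h$, $D^c_1f_{ijk}=(f_{i+1,j,k}-f_{i-1,j,k})/(2h)$, analogously in directions 2, 3. $\Delta_hf=\sum_\alpha D^-_\alpha D^+_\alpha f$, $\alpha_h(Q)_{ws}=\sum_\beta[D^c_wD^c_\beta Q_{s\beta}+D^c_sD^c_\beta Q_{w\beta}]-\frac23\sum_{\beta,\gamma}D^c_\beta D^c_\gamma Q_{\beta\gamma}\delta_{ws}$. $\langle A,B\rangle_h=h^3\sum_{i,j,k=0}^{N+1}A_{ijk}:B_{ijk}$.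 *)

(* Defs.v *)
From HB Require Import structures.
From mathcomp Require Import all_boot all_order all_algebra.
Set Implicit Arguments. Unset Strict Implicit. Unset Printing Implicit Defensive.
Import Order.TTheory GRing.Theory Num.Theory.
Local Open Scope ring_scope.

Section Defs.
Variable R : rcfType.

Definition gridfun := int -> int -> int -> 'M[R]_3.

Definition frob (A B : 'M[R]_3) : R := \sum_(i < 3) \sum_(j < 3) A i j * B i j.

Definition bulk (a b c A0 : R) (Q : 'M[R]_3) : R :=
  a / 2 * \tr (Q *m Q) - b / 3 * \tr (Q *m Q *m Q)
  + c / 4 * (\tr (Q *m Q)) ^+ 2 + A0.
Definition rQ (a b c A0 : R) (Q : 'M[R]_3) : R := Num.sqrt (2 * bulk a b c A0 Q).
Definition SQ (a b c : R) (Q : 'M[R]_3) : 'M[R]_3 :=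
  a *: Q - b *: (Q *m Q - (\tr (Q *m Q) / 3) *: 1%:M) + (c * \tr (Q *m Q)) *: Q.
Definition PQ (a b c A0 : R) (Q : 'M[R]_3) : 'M[R]_3 :=
  (rQ a b c A0 Q)^-1 *: SQ a b c Q.

Definition symmetric_mx (Q : 'M[R]_3) : Prop := Q^T = Q.
Definition tracefree_sym (Q : 'M[R]_3) : Prop := Q^T = Q /\ \tr Q = 0.

Definition hN (N : nat) : R := (N.+1%:R)^-1.

Definition in_grid (N : nat) (i : int) : bool := (1 <= i) && (i <= N%:Z).

Definition bc (N : nat) (f : gridfun) : Prop :=
  forall i j k, ~~ [&& in_grid N i, in_grid N j & in_grid N k] -> f i j k = 0.

Definition inV (N : nat) (f : gridfun) : Prop :=
  bc N f /\ forall i j k, tracefree_sym (f i j k).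

Definition shift (d : 'I_3) (s : int) (f : gridfun) : gridfun :=
  fun i j k => match val d with
               | 0 => f (i + s) j k
               | 1 => f i (j + s) k
               | _ => f i j (k + s)
               end.

Definition Dp (h : R) (d : 'I_3) (f : gridfun) : gridfun :=
  fun i j k => h^-1 *: (shift d 1 f i j k - f i j k).
Definition Dm (h : R) (d : 'I_3) (f : gridfun) : gridfun :=
  fun i j k => h^-1 *: (f i j k - shift d (-1) f i j k).
Definition Dc (h : R) (d : 'I_3) (f : gridfun) : gridfun :=
  fun i j k => (2 * h)^-1 *: (shift d 1 f i j k - shift d (-1) f i j k).

Definition lap_h (h : R) (f : gridfun) : gridfun :=
  fun i j k => \sum_(d < 3) Dm h d (Dp h d f) i j k.

Definition alpha_h (h : R) (Q : gridfun) : gridfun :=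
  fun i j k => \matrix_(w < 3, s < 3)
    (\sum_(be < 3) (Dc h w (Dc h be Q) i j k s be + Dc h s (Dc h be Q) i j k w be)
     - 2 / 3 * (\sum_(be < 3) \sum_(ga < 3) Dc h be (Dc h ga Q) i j k be ga)
       * (w == s)%:R).

Definition inner_h (N : nat) (f g : gridfun) : R :=
  hN N ^+ 3 * \sum_(0 <= i < N.+2) \sum_(0 <= j < N.+2) \sum_(0 <= k < N.+2)
    frob (f i%:Z j%:Z k%:Z) (g i%:Z j%:Z k%:Z).

Definition Pbar (a b c A0 : R) (Qn Qn1 : gridfun) : gridfun :=
  fun i j k => (3 / 2) *: PQ a b c A0 (Qn i j k) - (1 / 2) *: PQ a b c A0 (Qn1 i j k).

Definition opA (a b c A0 L1 L2 L3 M dt : R) (N : nat) (Qn Qn1 : gridfun)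
  (Q : gridfun) : gridfun :=
  let h := hN N in
  let Pb := Pbar a b c A0 Qn Qn1 in
  fun i j k =>
    dt^-1 *: Q i j k - (M * L1 / 2) *: lap_h h Q i j k
    + (M / 2 * frob (Pb i j k) (Q i j k)) *: Pb i j k
    - (M * (L2 + L3) / 4) *: alpha_h h Q i j k.

End Defs.

(* Main.v *)
Require Import Defs.
From mathcomp Require Import all_boot all_order all_algebra.
From mathcomp Require Import zify ring lra.
From Stdlib Require Import FunctionalExtensionality Classical.
Import Order.TTheory GRing.Theory Num.Theory.
Local Open Scope ring_scope.

Module P1.
Local Open Scope ring_scope.

Section Frame.
Variable R : rcfType.
Variable N : nat.

Definition G := int -> int -> int -> R.

Definition sum1 (F : int -> R) : R := \sum_(0 <= n < N.+4.+2) F (Posz n - 2).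
Definition Sb (f : G) : R := sum1 (fun i => sum1 (fun j => sum1 (fun k => f i j k))).

Lemma sum1_ext F1 F2 : (forall i, F1 i = F2 i) -> sum1 F1 = sum1 F2.
Proof. by move=> H; apply: eq_bigr => n _; rewrite H. Qed.

Lemma sum1_lin c1 c2 F1 F2 :
  sum1 (fun i => c1 * F1 i + c2 * F2 i) = c1 * sum1 F1 + c2 * sum1 F2.
Proof. by rewrite /sum1 big_split /= -!mulr_sumr. Qed.

Lemma sum1_0 : sum1 (fun _ => 0) = 0.
Proof. by rewrite /sum1 big1. Qed.

Lemma sum1_ge0 F : (forall i, 0 <= F i) -> 0 <= sum1 F.
Proof. by move=> H; apply: sumr_ge0 => n _. Qed.

Lemma Sb_ext f1 f2 : (forall i j k, f1 i j k = f2 i j k) -> Sb f1 = Sb f2.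
Proof.
move=> H; apply: sum1_ext => i; apply: sum1_ext => j; apply: sum1_ext => k; exact: H.
Qed.

Lemma Sb_lin c1 c2 f1 f2 :
  Sb (fun i j k => c1 * f1 i j k + c2 * f2 i j k) = c1 * Sb f1 + c2 * Sb f2.
Proof.
rewrite /Sb -sum1_lin; apply: sum1_ext => i; rewrite -sum1_lin.
apply: sum1_ext => j; by rewrite -sum1_lin.
Qed.

Lemma Sb_0 : Sb (fun _ _ _ => 0) = 0.
Proof.
rewrite /Sb -[RHS]sum1_0; apply: sum1_ext => i; rewrite -[RHS]sum1_0.
apply: sum1_ext => j; by rewrite sum1_0.
Qed.

Lemma Sb_add f1 f2 : Sb (fun i j k => f1 i j k + f2 i j k) = Sb f1 + Sb f2.
Proof. have := Sb_lin 1 1 f1 f2; rewrite !mul1r => <-; apply: Sb_ext => *; by rewrite !mul1r. Qed.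

Lemma Sb_scale c f : Sb (fun i j k => c * f i j k) = c * Sb f.
Proof. have := Sb_lin c 0 f f; rewrite mul0r addr0 => <-; apply: Sb_ext => *; by rewrite mul0r addr0. Qed.

Lemma Sb_opp f : Sb (fun i j k => - f i j k) = - Sb f.
Proof. rewrite -mulN1r -Sb_scale; apply: Sb_ext => *; by rewrite mulN1r. Qed.

Lemma Sb_sum (I : Type) (r : seq I) (F : I -> G) :
  Sb (fun i j k => \sum_(a <- r) F a i j k) = \sum_(a <- r) Sb (F a).
Proof.
elim: r => [|a r IH].
  rewrite big_nil; transitivity (Sb (fun _ _ _ => 0)); last exact: Sb_0.
  apply: Sb_ext => *; by rewrite big_nil.
rewrite big_cons -IH -Sb_add; apply: Sb_ext => *; by rewrite big_cons.
Qed.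

Lemma Sb_ge0 f : (forall i j k, 0 <= f i j k) -> 0 <= Sb f.
Proof.
move=> H; apply: sum1_ge0 => i; apply: sum1_ge0 => j; apply: sum1_ge0 => k; exact: H.
Qed.

Lemma sum1_shift1 F : F (-2) = 0 -> F (Posz N + 4) = 0 ->
  sum1 (fun i => F (i + 1)) = sum1 F.
Proof.
move=> H0 H1; rewrite /sum1.
have E : \sum_(0 <= n < N.+4.+2.+1) F (Posz n - 2) = F (Posz 0 - 2) + \sum_(0<= n < N.+4.+2) F (Posz n.+1 - 2) by rewrite big_nat_recl.
have E2 : \sum_(0 <= n < N.+4.+2.+1) F (Posz n - 2) = \sum_(0<= n < N.+4.+2) F (Posz n - 2) + F (Posz N.+4.+2 - 2) by rewrite big_nat_recr.
have -> : \sum_(0 <= n < N.+4.+2) F (Posz n - 2 + 1) = \sum_(0 <= n < N.+4.+2) F (Posz n.+1 - 2).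
  by apply: eq_bigr => n _; congr F; lia.
have e1 : Posz 0 - 2 = -2 by [].
have e2 : Posz N.+4.+2 - 2 = Posz N + 4 by lia.
move: E E2; rewrite e1 e2 H0 H1 add0r addr0 => <- <-. done.
Qed.

Lemma sum1_shiftm1 F : F (-3) = 0 -> F (Posz N + 3) = 0 ->
  sum1 (fun i => F (i + -1)) = sum1 F.
Proof.
move=> H0 H1.
have := sum1_shift1 (fun i => F (i + -1)).
have e1 : -2 + -1 = -3 :> int by [].
have e2 : Posz N + 4 + -1 = Posz N + 3 by lia.
rewrite e1 e2 => /(_ H0 H1) <-; apply: sum1_ext => i; congr F; lia.
Qed.

End Frame.

End P1.
Import P1.

Module P2.
Local Open Scope ring_scope.
Set Implicit Arguments. Unset Strict Implicit.

Section Frame2.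
Variable R : rcfType.
Variable N : nat.
Local Notation G := (G R).
Local Notation Sb := (P1.Sb R N).
Local Notation sum1 := (sum1 R N).

Definition inb (m : int) (i : int) : bool := (1 - m <= i) && (i <= Posz N + m).
Definition supp (m : int) (f : G) : Prop :=
  forall i j k, ~~ [&& inb m i, inb m j & inb m k] -> f i j k = 0.

Lemma supp_i {m f i j k} : supp m f -> ~~ inb m i -> f i j k = 0.
Proof. by move=> H Hi; apply: H; rewrite (negbTE Hi). Qed.
Lemma supp_j {m f i j k} : supp m f -> ~~ inb m j -> f i j k = 0.
Proof. by move=> H Hi; apply: H; rewrite (negbTE Hi) andbF. Qed.
Lemma supp_k {m f i j k} : supp m f -> ~~ inb m k -> f i j k = 0.
Proof. by move=> H Hi; apply: H; rewrite (negbTE Hi) !andbF. Qed.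

Lemma sum1_zero F : (forall i, F i = 0) -> sum1 F = 0.
Proof. move=> H; rewrite -(sum1_0 R N); exact: sum1_ext. Qed.

Lemma supp_mono m m' f : m <= m' -> supp m f -> supp m' f.
Proof.
move=> le H i j k Hn; apply: H; move: Hn; apply: contraNN; rewrite /inb.
move=> /and3P[/andP[? ?] /andP[? ?] /andP[? ?]]; apply/and3P; split; apply/andP; split; lia.
Qed.

Lemma sum1_box H : H (-2) = 0 -> H (-1) = 0 -> H (Posz N + 2) = 0 -> H (Posz N + 3) = 0 ->
  \sum_(0 <= i < N.+2) H (Posz i) = sum1 H.
Proof.
move=> h1 h2 h3 h4.
rewrite /P1.sum1 [in RHS]big_nat_recl // [in RHS]big_nat_recl //.
have -> : \sum_(0 <= i < N.+4) H (Posz i.+2 - 2) = \sum_(0<=i<N.+2) H (Posz i) + H (Posz N + 2) + H (Posz N + 3).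
  rewrite [in LHS]big_nat_recr // [in LHS]big_nat_recr //=.
  congr (_ + _ + _); [apply: eq_bigr => i _ |..]; congr H; lia.
have e1 : Posz 0 - 2 = -2 :> int by [].
have e2 : Posz 1 - 2 = -1 :> int by [].
by rewrite e1 e2 h1 h2 h3 h4 !add0r !addr0.
Qed.


Definition sh (d : 'I_3) (s : int) (u : G) : G :=
  fun i j k => match val d with
               | 0 => u (i + s) j k
               | 1 => u i (j + s) k
               | _ => u i j (k + s)
               end.

Lemma supp_sh m d s u : (s == 1) || (s == -1) -> 0 <= m -> supp m u -> supp (m + 1) (sh d s u).
Proof.
move=> hs hm H i j k Hn; rewrite /sh.
case: d => [[|[|[|d]]] hd] //=; apply: H; move: Hn; apply: contraNN; rewrite /inb;
move=> /and3P[/andP[? ?] /andP[? ?] /andP[? ?]]; apply/and3P; split; apply/andP; split; lia.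
Qed.

Lemma supp_lin m c1 c2 f1 f2 : supp m f1 -> supp m f2 ->
  supp m (fun i j k => c1 * f1 i j k + c2 * f2 i j k).
Proof. by move=> H1 H2 i j k Hn; rewrite H1 // H2 // !mulr0 addr0. Qed.

Lemma supp_mull m u v : supp m u -> supp m (fun i j k => u i j k * v i j k).
Proof. by move=> H i j k Hn; rewrite H // mul0r. Qed.

Lemma supp_mulr m u v : supp m v -> supp m (fun i j k => u i j k * v i j k).
Proof. by move=> H i j k Hn; rewrite H // mulr0. Qed.

Lemma Sb_sh1 d q : supp 2 q -> Sb (sh d 1 q) = Sb q.
Proof.
move=> H; rewrite /sh /P1.Sb; case: d => [[|[|[|d]]] hd] //=.
- apply: sum1_shift1; apply: sum1_zero => j; apply: sum1_zero => k; apply: (supp_i H); rewrite /inb; lia.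
- apply: sum1_ext => i; apply: sum1_shift1; apply: sum1_zero => k; apply: (supp_j H); rewrite /inb; lia.
- apply: sum1_ext => i; apply: sum1_ext => j; apply: sum1_shift1; apply: (supp_k H); rewrite /inb; lia.
Qed.

Lemma Sb_shm1 d q : supp 2 q -> Sb (sh d (-1) q) = Sb q.
Proof.
move=> H; rewrite /sh /P1.Sb; case: d => [[|[|[|d]]] hd] //=.
- apply: sum1_shiftm1; apply: sum1_zero => j; apply: sum1_zero => k; apply: (supp_i H); rewrite /inb; lia.
- apply: sum1_ext => i; apply: sum1_shiftm1; apply: sum1_zero => k; apply: (supp_j H); rewrite /inb; lia.
- apply: sum1_ext => i; apply: sum1_ext => j; apply: sum1_shiftm1; apply: (supp_k H); rewrite /inb; lia.
Qed.

Definition ip (u v : G) : R := Sb (fun i j k => u i j k * v i j k).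

Lemma ipC u v : ip u v = ip v u.
Proof. apply: Sb_ext => *; exact: mulrC. Qed.

Lemma transfer1 d u v : supp 1 u -> ip u (sh d 1 v) = ip (sh d (-1) u) v.
Proof.
move=> H; rewrite /ip -(Sb_shm1 d (q := fun i j k => u i j k * sh d 1 v i j k)).
  apply: Sb_ext => i j k; rewrite /sh; case: d => [[|[|[|d]]] hd] //=; congr (_ * _); congr v; lia.
apply: (supp_mono (m := 1)) => //; exact: supp_mull.
Qed.

Lemma transferm1 d u v : supp 1 u -> ip u (sh d (-1) v) = ip (sh d 1 u) v.
Proof.
move=> H; rewrite /ip -(Sb_sh1 d (q := fun i j k => u i j k * sh d (-1) v i j k)).
  apply: Sb_ext => i j k; rewrite /sh; case: d => [[|[|[|d]]] hd] //=; congr (_ * _); congr v; lia.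
apply: (supp_mono (m := 1)) => //; exact: supp_mull.
Qed.

End Frame2.

End P2.
Import P2.

Module P3.
Local Open Scope ring_scope.
Set Implicit Arguments. Unset Strict Implicit.

Section Frame3.
Variable R : rcfType.
Variable N : nat.
Local Notation G := (P1.G R).
Local Notation Sb := (P1.Sb R N).
Local Notation sum1 := (P1.sum1 R N).
Local Notation supp := (@supp R N).
Local Notation sh := (@sh R).
Local Notation ip := (@ip R N).
Local Notation h := (hN R N).

Definition dcs d (u : G) : G := fun i j k => (2 * h)^-1 * (sh d 1 u i j k - sh d (-1) u i j k).
Definition dps d (u : G) : G := fun i j k => h^-1 * (sh d 1 u i j k - u i j k).
Definition dms d (u : G) : G := fun i j k => h^-1 * (u i j k - sh d (-1) u i j k).

Lemma hs1 : ((1 : int) == 1) || ((1 : int) == -1). Proof. by rewrite eqxx. Qed.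
Lemma hsm1 : ((-1 : int) == 1) || ((-1 : int) == -1). Proof. by rewrite eqxx orbT. Qed.

Lemma supp_dcs m d u : 0 <= m -> supp m u -> supp (m + 1) (dcs d u).
Proof.
move=> hm H i j k Hn; rewrite /dcs.
rewrite (@supp_sh R N m d 1 u hs1 hm H i j k Hn) (@supp_sh R N m d (-1) u hsm1 hm H i j k Hn).
by rewrite subrr mulr0.
Qed.

Lemma sbp_dc d u v : supp 1 u -> ip u (dcs d v) = - ip (dcs d u) v.
Proof.
move=> H.
have -> : ip u (dcs d v) = (2 * h)^-1 * ip u (sh d 1 v) + (- (2 * h)^-1) * ip u (sh d (-1) v).
  rewrite /P2.ip -Sb_lin; apply: Sb_ext => i j k; rewrite /dcs; ring.
have -> : ip (dcs d u) v = (2 * h)^-1 * ip (sh d 1 u) v + (- (2 * h)^-1) * ip (sh d (-1) u) v.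
  rewrite /P2.ip -Sb_lin; apply: Sb_ext => i j k; rewrite /dcs; ring.
rewrite transfer1 // transferm1 //; ring.
Qed.

Lemma sbp_dm d u w : supp 1 u -> ip u (dms d w) = - ip (dps d u) w.
Proof.
move=> H.
have -> : ip u (dms d w) = h^-1 * ip u w + (- h^-1) * ip u (sh d (-1) w).
  rewrite /P2.ip -Sb_lin; apply: Sb_ext => i j k; rewrite /dms; ring.
have -> : ip (dps d u) w = h^-1 * ip (sh d 1 u) w + (- h^-1) * ip u w.
  rewrite /P2.ip -Sb_lin; apply: Sb_ext => i j k; rewrite /dps; ring.
rewrite transferm1 //; ring.
Qed.

Lemma sbp_dc' d X Y : supp 1 Y -> ip (dcs d X) Y = - ip X (dcs d Y).
Proof. by move=> H; rewrite ipC sbp_dc // ipC. Qed.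

Lemma sbp_dm' d X Y : supp 1 Y -> ip (dms d X) Y = - ip X (dps d Y).
Proof. by move=> H; rewrite ipC sbp_dm // ipC. Qed.

Lemma ip_suml (I : Type) (r : seq I) (F : I -> G) v :
  ip (fun i j k => \sum_(a <- r) F a i j k) v = \sum_(a <- r) ip (F a) v.
Proof.
rewrite /P2.ip -Sb_sum; apply: Sb_ext => i j k; by rewrite mulr_suml.
Qed.

Lemma ip_sumr (I : Type) (r : seq I) (F : I -> G) u :
  ip u (fun i j k => \sum_(a <- r) F a i j k) = \sum_(a <- r) ip u (F a).
Proof. by rewrite ipC ip_suml; apply: eq_bigr => a _; rewrite ipC. Qed.

Definition comp (a b : 'I_3) (f : gridfun R) : G := fun i j k => f i j k a b.

Lemma Dc_entry d f i j k a b : Dc h d f i j k a b = dcs d (comp a b f) i j k.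
Proof.
rewrite /Dc /dcs /sh /shift /comp !mxE; by case: (val d) => [|[|n]].
Qed.

Lemma Dp_entry d f i j k a b : Dp h d f i j k a b = dps d (comp a b f) i j k.
Proof.
rewrite /Dp /dps /sh /shift /comp !mxE; by case: (val d) => [|[|n]].
Qed.

Lemma Dm_entry d f i j k a b : Dm h d f i j k a b = dms d (comp a b f) i j k.
Proof.
rewrite /Dm /dms /sh /shift /comp !mxE; by case: (val d) => [|[|n]].
Qed.

Lemma comp_Dc a b d f : comp a b (Dc h d f) = dcs d (comp a b f).
Proof.
apply: functional_extensionality => i; apply: functional_extensionality => j;
apply: functional_extensionality => k; exact: Dc_entry.
Qed.

Lemma comp_Dp a b d f : comp a b (Dp h d f) = dps d (comp a b f).
Proof.
apply: functional_extensionality => i; apply: functional_extensionality => j;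
apply: functional_extensionality => k; exact: Dp_entry.
Qed.

End Frame3.

End P3.
Import P3.

Module P4.
Local Open Scope ring_scope.
Set Implicit Arguments. Unset Strict Implicit.

Section Frame4.
Variable R : rcfType.
Variable N : nat.
Local Notation G := (P1.G R).
Local Notation Sb := (P1.Sb R N).
Local Notation supp := (@supp R N).
Local Notation ip := (@ip R N).
Local Notation h := (hN R N).
Local Notation dcs := (@dcs R N).
Local Notation dps := (@dps R N).
Local Notation dms := (@dms R N).
Local Notation comp := (@P3.comp R).

Lemma frobD (A B C : 'M[R]_3) : frob (A + B) C = frob A C + frob B C.
Proof.
rewrite /frob -big_split; apply: eq_bigr => i _; rewrite -big_split; apply: eq_bigr => j _.
by rewrite mxE mulrDl.
Qed.

Lemma frobN (A C : 'M[R]_3) : frob (- A) C = - frob A C.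
Proof.
rewrite /frob -sumrN; apply: eq_bigr => i _; rewrite -sumrN; apply: eq_bigr => j _.
by rewrite mxE mulNr.
Qed.

Lemma frobZ c (A C : 'M[R]_3) : frob (c *: A) C = c * frob A C.
Proof.
rewrite /frob mulr_sumr; apply: eq_bigr => i _; rewrite mulr_sumr; apply: eq_bigr => j _.
by rewrite mxE mulrA.
Qed.

Lemma frobC (A B : 'M[R]_3) : frob A B = frob B A.
Proof. by apply: eq_bigr => i _; apply: eq_bigr => j _; rewrite mulrC. Qed.

Lemma frob_lap f Q i j k :
  frob (lap_h h f i j k) (Q i j k) =
  \sum_(a < 3) \sum_(b < 3) \sum_(d < 3) dms d (dps d (comp a b f)) i j k * comp a b Q i j k.
Proof.
rewrite /frob; apply: eq_bigr => a _; apply: eq_bigr => b _.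
rewrite /lap_h summxE mulr_suml; apply: eq_bigr => d _.
by rewrite Dm_entry comp_Dp.
Qed.

Lemma frob_alpha f Q i j k :
  frob (alpha_h h f i j k) (Q i j k) =
  \sum_(w < 3) \sum_(s < 3) \sum_(be < 3)
     (dcs w (dcs be (comp s be f)) i j k * comp w s Q i j k
      + dcs s (dcs be (comp w be f)) i j k * comp w s Q i j k)
  - (2 / 3 * (\sum_(be < 3) \sum_(ga < 3) Dc h be (Dc h ga f) i j k be ga)) * \tr (Q i j k).
Proof.
rewrite /frob /mxtrace mulr_sumr -sumrB; apply: eq_bigr => w _.
under eq_bigr => s _ do rewrite mxE mulrBl.
rewrite sumrB; congr (_ - _).
  apply: eq_bigr => s _; rewrite mulr_suml; apply: eq_bigr => be _.
  by rewrite !Dc_entry !comp_Dc mulrDl.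
rewrite (bigD1 w) //= eqxx mulr1 [X in _ + X]big1 ?addr0 //.
by move=> s; rewrite eq_sym => /negbTE ->; rewrite mulr0 mul0r.
Qed.


Lemma Sb_sum3 (F : 'I_3 -> 'I_3 -> 'I_3 -> G) :
  Sb (fun i j k => \sum_(w < 3) \sum_(s < 3) \sum_(be < 3) F w s be i j k)
  = \sum_(w < 3) \sum_(s < 3) \sum_(be < 3) Sb (F w s be).
Proof.
rewrite Sb_sum; apply: eq_bigr => w _; rewrite Sb_sum; apply: eq_bigr => s _; by rewrite Sb_sum.
Qed.

Lemma sumN3 (X : 'I_3 -> 'I_3 -> 'I_3 -> R) :
  \sum_(w < 3) \sum_(s < 3) \sum_(be < 3) - X w s be = - \sum_(w < 3) \sum_(s < 3) \sum_(be < 3) X w s be.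
Proof.
rewrite -sumrN; apply: eq_bigr => w _; rewrite -sumrN; apply: eq_bigr => s _; by rewrite -sumrN.
Qed.

Lemma sumND3 (X Y : 'I_3 -> 'I_3 -> 'I_3 -> R) :
  \sum_(w < 3) \sum_(s < 3) \sum_(be < 3) (- X w s be - Y w s be) =
  - (\sum_(w < 3) \sum_(s < 3) \sum_(be < 3) X w s be + \sum_(w < 3) \sum_(s < 3) \sum_(be < 3) Y w s be).
Proof.
rewrite opprD -!sumrN -big_split; apply: eq_bigr => w _; rewrite -!sumrN -big_split; apply: eq_bigr => s _.
rewrite -!sumrN -big_split; by apply: eq_bigr => be _.
Qed.

Lemma Sb_lap f Q : (forall a b, supp 0 (comp a b Q)) ->
  Sb (fun i j k => frob (lap_h h f i j k) (Q i j k)) =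
  - \sum_(a < 3) \sum_(b < 3) \sum_(d < 3) ip (dps d (comp a b f)) (dps d (comp a b Q)).
Proof.
move=> HQ.
rewrite (@Sb_ext R N _ (fun i j k => \sum_(a < 3) \sum_(b < 3) \sum_(d < 3)
   dms d (dps d (comp a b f)) i j k * comp a b Q i j k)); last by move=> i j k; rewrite frob_lap.
rewrite Sb_sum3 -sumN3; apply: eq_bigr => a _; apply: eq_bigr => b _; apply: eq_bigr => d _.
apply: (sbp_dm' (N := N)); apply: (supp_mono (m := 0)) => //.
Qed.

Definition div (Q : gridfun R) (s : 'I_3) : G :=
  fun i j k => \sum_(w < 3) dcs w (comp s w Q) i j k.

Lemma comp_sym Q w s : (forall i j k, (Q i j k)^T = Q i j k) -> comp w s Q = comp s w Q.
Proof.
move=> H; apply: functional_extensionality => i; apply: functional_extensionality => j;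
apply: functional_extensionality => k; rewrite /P3.comp.
by have /matrixP /(_ s w) := H i j k; rewrite mxE.
Qed.

Lemma Sb_alpha f Q : (forall a b, supp 0 (comp a b Q)) ->
  (forall i j k, (Q i j k)^T = Q i j k) -> (forall i j k, \tr (Q i j k) = 0) ->
  Sb (fun i j k => frob (alpha_h h f i j k) (Q i j k)) =
  -2 * \sum_(s < 3) ip (div f s) (div Q s).
Proof.
move=> HQ Hs Ht.
rewrite (@Sb_ext R N _ (fun i j k => \sum_(w < 3) \sum_(s < 3) \sum_(be < 3)
     (dcs w (dcs be (comp s be f)) i j k * comp w s Q i j k
      + dcs s (dcs be (comp w be f)) i j k * comp w s Q i j k))); last first.
  by move=> i j k; rewrite frob_alpha Ht mulr0 subr0.
rewrite Sb_sum3.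
have HQ1 : forall a b, supp 1 (comp a b Q) by move=> a b; apply: (supp_mono (m := 0)).
rewrite (eq_bigr (fun w => \sum_(s < 3) \sum_(be < 3)
   (- ip (dcs be (comp s be f)) (dcs w (comp w s Q))
    - ip (dcs be (comp w be f)) (dcs s (comp w s Q))))); last first.
  move=> w _; apply: eq_bigr => s _; apply: eq_bigr => be _.
  rewrite Sb_add; rewrite -!(sbp_dc' (N := N)) //.
rewrite sumND3.
have E1 : \sum_(w < 3) \sum_(s < 3) \sum_(be < 3) ip (dcs be (comp s be f)) (dcs w (comp w s Q))
   = \sum_(s < 3) ip (div f s) (div Q s).
  rewrite exchange_big; apply: eq_bigr => s _.
  rewrite /div ip_suml exchange_big; apply: eq_bigr => be _.
  rewrite ip_sumr; apply: eq_bigr => w _; by rewrite (comp_sym w s Hs).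
have E2 : \sum_(w < 3) \sum_(s < 3) \sum_(be < 3) ip (dcs be (comp w be f)) (dcs s (comp w s Q))
   = \sum_(s < 3) ip (div f s) (div Q s).
  apply: eq_bigr => w _.
  rewrite /div ip_suml exchange_big; apply: eq_bigr => be _.
  by rewrite ip_sumr.
rewrite E1 E2; ring.
Qed.

End Frame4.

End P4.
Import P4.

Module P5.
Local Open Scope ring_scope.
Set Implicit Arguments. Unset Strict Implicit.

Section Frame5.
Variable R : rcfType.
Variable N : nat.
Local Notation G := (P1.G R).
Local Notation Sb := (P1.Sb R N).
Local Notation supp := (@supp R N).
Local Notation ip := (@ip R N).
Local Notation h := (hN R N).
Local Notation dcs := (@dcs R N).
Local Notation dps := (@dps R N).
Local Notation dms := (@dms R N).
Local Notation comp := (@P3.comp R).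
Local Notation div := (@P4.div R N).

Lemma inb0 i : inb N 0 i = in_grid N i.
Proof. by rewrite /inb /in_grid subr0 addr0. Qed.

Lemma bc_supp Q a b : bc N Q -> supp 0 (comp a b Q).
Proof.
move=> H i j k Hn; rewrite /P3.comp H ?mxE //; by rewrite -!inb0.
Qed.

Lemma sum1_box' (F : nat -> R) H : H (-2) = 0 -> H (-1) = 0 -> H (Posz N + 2) = 0 -> H (Posz N + 3) = 0 ->
  (forall n, F n = H (Posz n)) -> \sum_(0 <= i < N.+2) F i = P1.sum1 R N H.
Proof.
move=> h1 h2 h3 h4 E; rewrite -sum1_box //; by apply: eq_bigr => n _.
Qed.

Lemma inner_Sb (F Q : gridfun R) : bc N Q ->
  inner_h N F Q = h ^+ 3 * Sb (fun i j k => frob (F i j k) (Q i j k)).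
Proof.
move=> H.
have Hp : supp 1 (fun i j k => frob (F i j k) (Q i j k)).
  apply: (supp_mono (m := 0)) => // i j k Hn.
  rewrite H; last by rewrite -!inb0.
  by rewrite /frob big1 // => a _; rewrite big1 // => b _; rewrite mxE mulr0.
rewrite /inner_h; congr (_ * _).
rewrite /P1.Sb; apply: sum1_box'.
- apply: sum1_zero => j; apply: sum1_zero => k; apply: (supp_i Hp); rewrite /inb; lia.
- apply: sum1_zero => j; apply: sum1_zero => k; apply: (supp_i Hp); rewrite /inb; lia.
- apply: sum1_zero => j; apply: sum1_zero => k; apply: (supp_i Hp); rewrite /inb; lia.
- apply: sum1_zero => j; apply: sum1_zero => k; apply: (supp_i Hp); rewrite /inb; lia.
move=> i; apply: sum1_box'.
- apply: sum1_zero => k; apply: (supp_j Hp); rewrite /inb; lia.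
- apply: sum1_zero => k; apply: (supp_j Hp); rewrite /inb; lia.
- apply: sum1_zero => k; apply: (supp_j Hp); rewrite /inb; lia.
- apply: sum1_zero => k; apply: (supp_j Hp); rewrite /inb; lia.
move=> j; apply: sum1_box'; try (apply: (supp_k Hp); rewrite /inb; lia).
by [].
Qed.


Variables (a b c A0 L1 L2 L3 M dt : R) (Qn Qn1 : gridfun R).
Local Notation Pb := (Pbar a b c A0 Qn Qn1).

Definition Eform (Q1 Q2 : gridfun R) : R :=
 dt^-1 * Sb (fun i j k => frob (Q1 i j k) (Q2 i j k))
 + (M * L1 / 2) * \sum_(a < 3) \sum_(b < 3) \sum_(d < 3) ip (dps d (comp a b Q1)) (dps d (comp a b Q2))
 + (M / 2) * Sb (fun i j k => frob (Pb i j k) (Q1 i j k) * frob (Pb i j k) (Q2 i j k))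
 + (M * (L2 + L3) / 2) * \sum_(s < 3) ip (div Q1 s) (div Q2 s).

Lemma Sb_lin4 c1 c2 c3 c4 f1 f2 f3 f4 :
  c1 * Sb f1 + c2 * Sb f2 + c3 * Sb f3 + c4 * Sb f4 =
  Sb (fun i j k => c1 * f1 i j k + c2 * f2 i j k + c3 * f3 i j k + c4 * f4 i j k).
Proof.
rewrite -!Sb_scale -!Sb_add; by apply: Sb_ext.
Qed.

Lemma main_formula Q1 Q2 : bc N Q2 -> (forall i j k, (Q2 i j k)^T = Q2 i j k) ->
  (forall i j k, \tr (Q2 i j k) = 0) ->
  inner_h N (opA a b c A0 L1 L2 L3 M dt N Qn Qn1 Q1) Q2 = h ^+ 3 * Eform Q1 Q2.
Proof.
move=> Hb Hs Ht.
rewrite inner_Sb //; congr (_ * _).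
have HQ : forall a b, supp 0 (comp a b Q2) by move=> *; exact: bc_supp.
transitivity (dt^-1 * Sb (fun i j k => frob (Q1 i j k) (Q2 i j k))
   + (-(M*L1/2)) * Sb (fun i j k => frob (lap_h h Q1 i j k) (Q2 i j k))
   + (M/2) * Sb (fun i j k => frob (Pb i j k) (Q1 i j k) * frob (Pb i j k) (Q2 i j k))
   + (-(M*(L2+L3)/4)) * Sb (fun i j k => frob (alpha_h h Q1 i j k) (Q2 i j k))).
  rewrite Sb_lin4; apply: Sb_ext => i j k.
  rewrite /opA /=; move: (Pbar a b c A0 Qn Qn1 i j k) => P.
  rewrite !frobD !frobN !frobZ; ring.
rewrite Sb_lap // Sb_alpha // /Eform.
set e := dt^-1; clearbody e; by field.
Qed.

End Frame5.

End P5.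
Import P5.

Module P6.
Local Open Scope ring_scope.
Set Implicit Arguments. Unset Strict Implicit.

Section Frame6.
Variable R : rcfType.
Variable N : nat.
Local Notation Sb := (P1.Sb R N).
Local Notation ip := (@ip R N).
Local Notation h := (hN R N).

Lemma h_gt0 : 0 < h.
Proof. by rewrite /hN invr_gt0 ltr0Sn. Qed.

Lemma ord_sum_pos n (F : 'I_n -> R) i0 : (forall i, 0 <= F i) -> 0 < F i0 -> 0 < \sum_(i < n) F i.
Proof.
move=> Hge H0; rewrite (bigD1 i0) //=; apply: (lt_le_trans H0); rewrite lerDl.
by apply: sumr_ge0 => i _.
Qed.

Lemma nat_sum_pos K (F : nat -> R) m : (forall n, 0 <= F n) -> (m < K)%N -> 0 < F m ->
  0 < \sum_(0 <= n < K) F n.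
Proof. by move=> Hge Hm H0; rewrite big_mkord; apply: (@ord_sum_pos K (fun i : 'I_K => F i) (Ordinal Hm)). Qed.

Lemma frob_ge0 (A : 'M[R]_3) : 0 <= frob A A.
Proof. by apply: sumr_ge0 => a _; apply: sumr_ge0 => b _; rewrite -expr2 sqr_ge0. Qed.

Lemma frob_pos (A : 'M[R]_3) : A != 0 -> 0 < frob A A.
Proof.
move=> HA.
have [a [b Hab]] : exists a b, A a b != 0.
  apply: NNPP => Hn; move/eqP: HA; apply; apply/matrixP => a b; rewrite mxE.
  case: (eqVneq (A a b) 0) => // H; exfalso; apply: Hn; by exists a, b.
rewrite /frob; apply: (@ord_sum_pos _ _ a) => [i|]; first by apply: sumr_ge0 => j _; rewrite -expr2 sqr_ge0.
apply: (@ord_sum_pos _ _ b) => [j|]; first by rewrite -expr2 sqr_ge0.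
by rewrite -expr2 lt_def sqrf_eq0 Hab sqr_ge0.
Qed.

Lemma inner_pos (Q : gridfun R) : bc N Q -> Q <> (fun _ _ _ => 0) -> 0 < inner_h N Q Q.
Proof.
move=> Hb Hne.
have [i [j [k Hq]]] : exists i j k, Q i j k != 0.
  apply: NNPP => Hn; apply: Hne.
  apply: functional_extensionality => i; apply: functional_extensionality => j;
  apply: functional_extensionality => k.
  case: (eqVneq (Q i j k) 0) => // Hq; exfalso; apply: Hn; by exists i, j, k.
have /and3P[hi hj hk] : [&& in_grid N i, in_grid N j & in_grid N k].
  by apply/contraT => Hn; rewrite Hb ?eqxx in Hq.
case: i hi Hq => [ni|ni] hi Hq; last by move: hi; rewrite /in_grid; lia.
case: j hj Hq => [nj|nj] hj Hq; last by move: hj; rewrite /in_grid; lia.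
case: k hk Hq => [nk|nk] hk Hq; last by move: hk; rewrite /in_grid; lia.
rewrite /inner_h; apply: mulr_gt0; first by rewrite exprn_gt0 // h_gt0.
apply: (nat_sum_pos (m := ni)).
- by move=> n; apply: sumr_ge0 => ? _; apply: sumr_ge0 => ? _; exact: frob_ge0.
- by move: hi; rewrite /in_grid; lia.
apply: (nat_sum_pos (m := nj)).
- by move=> n; apply: sumr_ge0 => ? _; exact: frob_ge0.
- by move: hj; rewrite /in_grid; lia.
apply: (nat_sum_pos (m := nk)).
- by move=> n; exact: frob_ge0.
- by move: hk; rewrite /in_grid; lia.
exact: frob_pos.
Qed.

Lemma inner_sym (F Q : gridfun R) : inner_h N F Q = inner_h N Q F.
Proof.
rewrite /inner_h; congr (_ * _); apply: eq_bigr => i _; apply: eq_bigr => j _;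
apply: eq_bigr => k _; exact: frobC.
Qed.

Lemma ip_sq_ge0 u : 0 <= ip u u.
Proof. by apply: Sb_ge0 => i j k; rewrite -expr2 sqr_ge0. Qed.

Variables (a b c A0 L1 L2 L3 M dt : R) (Qn Qn1 : gridfun R).

Lemma Eform_sym Q1 Q2 : Eform N a b c A0 L1 L2 L3 M dt Qn Qn1 Q1 Q2 = Eform N a b c A0 L1 L2 L3 M dt Qn Qn1 Q2 Q1.
Proof.
rewrite /Eform; congr (_ * _ + _ * _ + _ * _ + _ * _).
- by apply: Sb_ext => *; exact: frobC.
- by apply: eq_bigr => ? _; apply: eq_bigr => ? _; apply: eq_bigr => ? _; exact: ipC.
- by apply: Sb_ext => *; exact: mulrC.
- by apply: eq_bigr => ? _; exact: ipC.
Qed.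

Lemma Eform_pos Q : 0 < dt -> 0 < M -> 0 < L1 -> 0 < L2 -> 0 < L3 ->
  0 < Sb (fun i j k => frob (Q i j k) (Q i j k)) -> 0 < Eform N a b c A0 L1 L2 L3 M dt Qn Qn1 Q Q.
Proof.
move=> hdt hM hL1 hL2 hL3 HS; rewrite /Eform.
set S1 := Sb _; set S2 := \sum_(a < 3) _; set S3 := Sb _; set S4 := \sum_(s < 3) _.
have h1 : 0 < dt^-1 * S1 by rewrite mulr_gt0 // invr_gt0.
have h2 : 0 <= M * L1 / 2 * S2.
  apply: mulr_ge0; first by rewrite divr_ge0 ?mulr_ge0 ?ltW.
  by apply: sumr_ge0 => ? _; apply: sumr_ge0 => ? _; apply: sumr_ge0 => ? _; exact: ip_sq_ge0.
have h3 : 0 <= M / 2 * S3.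
  apply: mulr_ge0; first by rewrite divr_ge0 ?ltW.
  by apply: Sb_ge0 => i j k; rewrite -expr2 sqr_ge0.
have h4 : 0 <= M * (L2 + L3) / 2 * S4.
  apply: mulr_ge0; first by rewrite divr_ge0 ?mulr_ge0 ?addr_ge0 ?ltW.
  by apply: sumr_ge0 => ? _; exact: ip_sq_ge0.
lra.
Qed.

End Frame6.


End P6.
Import P6.

Theorem theorem4p5 (R : rcfType) (a b c L1 L2 L3 M dt A0 : R)
  (hc : 0 < c) (hL1 : 0 < L1) (hL2 : 0 < L2) (hL3 : 0 < L3) (hM : 0 < M)
  (hdt : 0 < dt) (hA0 : 0 < A0)
  (hinf : exists m : R, 0 < m /\
      forall Q : 'M[R]_3, symmetric_mx Q -> m <= bulk a b c A0 Q)
  (N : nat) (Qn Qn1 : gridfun R) (hQn : inV N Qn) (hQn1 : inV N Qn1) :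
  (forall Q1 Q2 : gridfun R, inV N Q1 -> inV N Q2 ->
     inner_h N (opA a b c A0 L1 L2 L3 M dt N Qn Qn1 Q1) Q2
     = inner_h N Q1 (opA a b c A0 L1 L2 L3 M dt N Qn Qn1 Q2)) /\
  (forall Q : gridfun R, inV N Q -> Q <> (fun _ _ _ => 0) ->
     0 < inner_h N (opA a b c A0 L1 L2 L3 M dt N Qn Qn1 Q) Q).
Proof.
split.
- move=> Q1 Q2 [Hb1 Hs1] [Hb2 Hs2].
  rewrite main_formula //; last 2 first.
    by move=> i j k; case: (Hs2 i j k).
    by move=> i j k; case: (Hs2 i j k).
  rewrite [RHS]inner_sym main_formula //; last 2 first.
    by move=> i j k; case: (Hs1 i j k).
    by move=> i j k; case: (Hs1 i j k).
  by rewrite Eform_sym.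
- move=> Q [Hb Hs] Hne.
  rewrite main_formula //; last 2 first.
    by move=> i j k; case: (Hs i j k).
    by move=> i j k; case: (Hs i j k).
  apply: mulr_gt0; first by rewrite exprn_gt0 // h_gt0.
  apply: Eform_pos => //.
  by have := inner_pos Hb Hne; rewrite inner_Sb // pmulr_rgt0 // exprn_gt0 // h_gt0.
Qed.
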